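(* Let $H$ be a 5-vertex $K_4^{3-}$-free 3-graph whose shadow graph is complete. Then $H$ is isomorphic to $C_5$ or to $F_{3,2}$.
   Context: A 3-graph is a 3-uniform hypergraph. $K_4^{3-}$ has vertex set $[4]$ and edges $123,124,134$; $C_5$ has vertex set $[5]$ and edges $123,234,345,145,125$; $F_{3,2}$ has vertex set $[5]$ and edges $123,145,245,345$. $H$ is $F$-free if it has no (not necessarily induced) subhypergraph isomorphic to $F$. The shadow graph of $H$ is the graph on $V(H)$ in which a pair is an edge iff it is contained in some edge of $H$; it is complete if every pair of vertices is such an edge. *)

(* Defs.v *)
From mathcomp Require Import all_boot.
Set Implicit Arguments. Unset Strict Implicit. Unset Printing Implicit Defensive.

Definition is_3graph (V : finType) (E : {set {set V}}) : Prop :=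
  forall e, e \in E -> #|e| = 3.

Definition edge_img (V W : finType) (f : V -> W) (e : {set V}) : {set W} := f @: e.

Definition contains_copy (U V : finType) (F : {set {set U}}) (H : {set {set V}}) : Prop :=
  exists f : U -> V, injective f /\ forall e, e \in F -> edge_img f e \in H.

Definition free_of (U V : finType) (F : {set {set U}}) (H : {set {set V}}) : Prop :=
  ~ contains_copy F H.

Definition isomorphic (U V : finType) (H : {set {set U}}) (G : {set {set V}}) : Prop :=
  exists f : U -> V, bijective f /\ forall e : {set U}, (edge_img f e \in G) = (e \in H).

Definition shadow_complete (V : finType) (H : {set {set V}}) : Prop :=
  forall x y : V, x != y -> exists2 e, e \in H & (x \in e) && (y \in e).

(* The specific 3-graphs, with vertex [n] encoded as ordinal n-1. *)
Definition v4 (i : nat) : 'I_4 := inord i.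
Definition v5 (i : nat) : 'I_5 := inord i.

Definition K43minus : {set {set 'I_4}} :=
  [set [set v4 0; v4 1; v4 2]; [set v4 0; v4 1; v4 3]; [set v4 0; v4 2; v4 3]].

Definition C5 : {set {set 'I_5}} :=
  [set [set v5 0; v5 1; v5 2]; [set v5 1; v5 2; v5 3]; [set v5 2; v5 3; v5 4];
       [set v5 0; v5 3; v5 4]; [set v5 0; v5 1; v5 4]].

Definition F32 : {set {set 'I_5}} :=
  [set [set v5 0; v5 1; v5 2]; [set v5 0; v5 3; v5 4]; [set v5 1; v5 3; v5 4];
       [set v5 2; v5 3; v5 4]].

(* Main.v *)
Require Import Defs.
From mathcomp Require Import all_boot.
Set Implicit Arguments. Unset Strict Implicit. Unset Printing Implicit Defensive.

Definition I5 := iota 0 5.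
Definition T10 : seq (nat * nat * nat) :=
  [:: (0,1,2); (0,1,3); (0,1,4); (0,2,3); (0,2,4); (0,3,4); (1,2,3); (1,2,4); (1,3,4); (2,3,4)].
Definition code (a b c : nat) := 2 ^ a + 2 ^ b + 2 ^ c.
Definition codes10 := [seq code t.1.1 t.1.2 t.2 | t <- T10].
Definition hb (L : seq bool) a b c := nth false L (index (code a b c) codes10).
Definition eq3 a b c u v w :=
  all (fun i => ((i == a) || (i == b) || (i == c)) == ((i == u) || (i == v) || (i == w))) I5.

Lemma all3 (P : nat -> nat -> nat -> bool) :
  all (fun a => all (fun b => all (fun c => P a b c) I5) I5) I5 ->
  forall a b c, a < 5 -> b < 5 -> c < 5 -> P a b c.
Proof.
move=> /allP H a b c Ha Hb Hc.
have Ha' : a \in I5 by rewrite mem_iota.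
have Hb' : b \in I5 by rewrite mem_iota.
have Hc' : c \in I5 by rewrite mem_iota.
have /allP H1 := H a Ha'.
have /allP H2 := H1 b Hb'.
exact: H2 c Hc'.
Qed.

Lemma v5E a b : a < 5 -> b < 5 -> (v5 a == v5 b) = (a == b).
Proof. by move=> Ha Hb; rewrite /v5 -(inj_eq val_inj) /= !inordK. Qed.

Lemma v5_val (x : 'I_5) : v5 x = x.
Proof. exact: inord_val. Qed.

Lemma v5xE (x : 'I_5) a : a < 5 -> (x == v5 a) = (val x == a).
Proof. by move=> Ha; rewrite -v5E ?ltn_ord // v5_val. Qed.

Lemma set3E a b c u v w : a < 5 -> b < 5 -> c < 5 -> u < 5 -> v < 5 -> w < 5 ->
  ([set v5 a; v5 b; v5 c] == [set v5 u; v5 v; v5 w]) = eq3 a b c u v w.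
Proof.
move=> Ha Hb Hc Hu Hv Hw; apply/eqP/allP.
  move=> E i; rewrite mem_iota add0n => Hi.
  have := congr1 (fun S : {set 'I_5} => v5 i \in S) E; rewrite /= !inE !v5E // => ->.
  by rewrite eqxx.
move=> H; apply/setP => x; have := H (val x); rewrite /I5 mem_iota ltn_ord => /(_ isT) /eqP.
by rewrite !inE !v5xE.
Qed.

Lemma card3 (T : finType) (x y z : T) : x != y -> x != z -> y != z -> #|[set x; y; z]| = 3.
Proof.
move=> xy xz yz; rewrite -setUA !cardsU1 cards1 !inE.
by rewrite (negbTE xy) (negbTE xz) (negbTE yz).
Qed.

Lemma three_ext (T : finType) (e : {set T}) x y : #|e| = 3 -> x \in e -> y \in e -> x != y ->
  exists z, [/\ z != x, z != y & e = [set x; y; z]].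
Proof.
move=> ce xe ye xy.
have : #|e :\ x :\ y| == 1.
  have yex : y \in e :\ x by rewrite !inE eq_sym xy ye.
  by move: ce; rewrite (cardsD1 x e) xe (cardsD1 y (e :\ x)) yex !add1n => -[<-].
case/cards1P => z Ez.
have : z \in e :\ x :\ y by rewrite Ez set11.
rewrite !inE => /and3P [zy zx ze].
have xz : x != z by rewrite eq_sym.
have yz : y != z by rewrite eq_sym.
exists z; split => //; apply/eqP; rewrite eq_sym eqEcard card3 // ce leqnn andbT.
by apply/subsetP => w; rewrite !inE => /orP [/orP [] |] /eqP ->.
Qed.

Lemma card3P (T : finType) (e : {set T}) : #|e| = 3 ->
  exists x y z, [/\ x != y, x != z, y != z & e = [set x; y; z]].
Proof.
move=> ce.
have : e != set0 by rewrite -card_gt0 ce.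
case/set0Pn => x xe.
have : #|e :\ x| == 2 by move: ce; rewrite (cardsD1 x e) xe add1n => -[<-].
case/cards2P => y [z [yz E]].
have : y \in e :\ x by rewrite E !inE eqxx.
have : z \in e :\ x by rewrite E !inE eqxx orbT.
rewrite !inE => /andP [zx ze] /andP [yx ye].
exists x, y, z; split => //; try by rewrite eq_sym.
by rewrite -setUA -E setD1K.
Qed.

Definition k4 L := all (fun a => all (fun b => all (fun c => all (fun d =>
  if uniq [:: a; b; c; d] then ~~ [&& hb L a b c, hb L a b d & hb L a c d] else true)
  I5) I5) I5) I5.
Definition shc L := all (fun x => all (fun y =>
  if x != y then has (fun z => [&& z != x, z != y & hb L x y z]) I5 else true) I5) I5.
Definition isoc L LC := has (fun p => all (fun a => all (fun b => all (fun c =>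
  if uniq [:: a; b; c] then hb L a b c == hb LC (nth 0 p a) (nth 0 p b) (nth 0 p c) else true)
  I5) I5) I5) (permutations I5).
Definition LC5 := [:: true; false; true; false; false; true; true; false; false; true].
Definition LF32 := [:: true; false; false; false; false; true; false; false; true; true].
Definition chk L := if k4 L then if shc L then isoc L LC5 || isoc L LF32 else true else true.
Fixpoint bl n : seq (seq bool) := if n is n'.+1 then
  flatten [seq [:: false :: l; true :: l] | l <- bl n'] else [:: [::]].

Section G.
Variable G : {set {set 'I_5}}.
Definition Lg := [seq [set v5 t.1.1; v5 t.1.2; v5 t.2] \in G | t <- T10].

Lemma hb_Lg a b c : a < 5 -> b < 5 -> c < 5 -> uniq [:: a; b; c] ->
  hb Lg a b c = ([set v5 a; v5 b; v5 c] \in G).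
Proof.
move=> Ha Hb Hc U.
have K := @all3 (fun a b c => if uniq [:: a; b; c] then
  (index (code a b c) codes10 < 10) &&
  (let t := nth (0,0,0) T10 (index (code a b c) codes10) in eq3 t.1.1 t.1.2 t.2 a b c)
  else true) (erefl true) a b c Ha Hb Hc.
move: K; rewrite U /= => /andP [Hi He].
rewrite /hb /Lg (nth_map (0,0,0)) //.
set t := nth _ _ _ in He *.
have Ht : [/\ t.1.1 < 5, t.1.2 < 5 & t.2 < 5].
  have : t \in T10 by rewrite mem_nth.
  by rewrite !inE => /orP[|/orP[|/orP[|/orP[|/orP[|/orP[|/orP[|/orP[|/orP[]]]]]]]]] /eqP ->.
case: Ht => H1 H2 H3.
by move: He; rewrite -set3E // => /eqP ->.
Qed.

Lemma v5_inj a b : a < 5 -> b < 5 -> v5 a = v5 b -> a = b.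
Proof. by move=> Ha Hb E; apply/eqP; rewrite -v5E // E. Qed.

Lemma k4_G : free_of K43minus G -> k4 Lg.
Proof.
move=> Hf; apply/allP => a; rewrite /I5 mem_iota => /andP [_ Ha].
apply/allP => b; rewrite mem_iota => /andP [_ Hb].
apply/allP => c; rewrite mem_iota => /andP [_ Hc].
apply/allP => d; rewrite mem_iota => /andP [_ Hd].
case: ifP => // U.
have U' := U; move: U'; rewrite /= !inE !negb_or => /andP [/and3P [ab ac ad] /andP [/andP [bc bd] /andP [cd _]]].
rewrite !hb_Lg //= ?inE ?negb_or ?ab ?ac ?ad ?bc ?bd ?cd //.
apply/negP => /and3P [h1 h2 h3]; apply: Hf.
pose f := fun i : 'I_4 => v5 (nth 0 [:: a; b; c; d] i).
have fv : [/\ f (v4 0) = v5 a, f (v4 1) = v5 b, f (v4 2) = v5 c & f (v4 3) = v5 d].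
  by rewrite /f /v4 !inordK.
case: fv => f0 f1 f2 f3.
exists f; split.
  move=> i j; rewrite /f => /v5_inj.
  have Hn : forall k : 'I_4, nth 0 [:: a; b; c; d] k < 5.
    by case=> [[|[|[|[|k]]]] Hk].
  move=> /(_ (Hn i) (Hn j)) /eqP; rewrite nth_uniq // => /eqP; exact: val_inj.
move=> e; rewrite /K43minus !inE => /orP [/orP [] |] /eqP ->;
  by rewrite /edge_img !imsetU !imset_set1 ?f0 ?f1 ?f2 ?f3.
Qed.

Lemma sh_G : is_3graph G -> shadow_complete G -> shc Lg.
Proof.
move=> G3 Hs; apply/allP => x; rewrite /I5 mem_iota => /andP [_ Hx].
apply/allP => y; rewrite mem_iota => /andP [_ Hy].
case: ifP => // nxy.
have nv : v5 x != v5 y by rewrite v5E.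
have [e eG /andP [xe ye]] := Hs _ _ nv.
have [z [zx zy E]] := three_ext (G3 _ eG) xe ye nv.
apply/hasP; exists (val z); first by rewrite mem_iota ltn_ord.
have zx' : val z != x by rewrite -v5xE.
have zy' : val z != y by rewrite -v5xE.
rewrite zx' zy' hb_Lg ?ltn_ord //= ?inE ?negb_or ?nxy ?(eq_sym x) ?(eq_sym y) ?zx' ?zy' //.
by rewrite v5_val -E.
Qed.

Lemma iso_G (C : {set {set 'I_5}}) LC : is_3graph G -> is_3graph C ->
  (forall a b c, a < 5 -> b < 5 -> c < 5 -> uniq [:: a; b; c] ->
     hb LC a b c = ([set v5 a; v5 b; v5 c] \in C)) ->
  isoc Lg LC -> isomorphic G C.
Proof.
move=> G3 C3 HC /hasP [p]; rewrite mem_permutations => pp Hall.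
have sp : size p = 5 by rewrite (perm_size pp).
have up : uniq p by rewrite (perm_uniq pp).
have np : forall i : 'I_5, nth 0 p i < 5.
  move=> i; have : nth 0 p i \in p by rewrite mem_nth // sp.
  by rewrite (perm_mem pp) /I5 mem_iota.
pose f := fun i : 'I_5 => v5 (nth 0 p i).
have fi : injective f.
  move=> i j; rewrite /f => /(v5_inj (np i) (np j)) /eqP.
  by rewrite nth_uniq ?sp // => /eqP; exact: val_inj.
have nE : forall i j : 'I_5, (nth 0 p i == nth 0 p j) = (i == j).
  by move=> i j; rewrite nth_uniq ?sp // -(inj_eq val_inj).
exists f; split; first exact: injF_bij.
move=> e; case: (boolP (#|e| == 3)) => [/eqP ce|ce].
  have [x [y [z [xy xz yz ->]]]] := card3P ce.
  rewrite /edge_img !imsetU !imset_set1 /f -HC ?np //=; last by rewrite !inE !negb_or !nE xy xz yz.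
  rewrite -[x in RHS]v5_val -[y in RHS]v5_val -[z in RHS]v5_val -hb_Lg ?ltn_ord //=;
    last by rewrite /= !inE !negb_or xy xz yz.
  have := all3 Hall (ltn_ord x) (ltn_ord y) (ltn_ord z).
  rewrite /= !inE !negb_or.
  by rewrite (_ : [&& _, _ & _] = true) /=; [move=> /eqP -> | apply/and3P; split; [apply/andP; split| |]].

have -> : (e \in G) = false.
  by apply/negP => /G3 /eqP; rewrite (negbTE ce).
by apply/negP => /C3; rewrite /edge_img card_imset // => /eqP; rewrite (negbTE ce).
Qed.
End G.

Lemma all3_U (P : nat -> nat -> nat -> bool) :
  all (fun a => all (fun b => all (fun c => if uniq [:: a; b; c] then P a b c else true) I5) I5) I5 ->
  forall a b c, a < 5 -> b < 5 -> c < 5 -> uniq [:: a; b; c] -> P a b c.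
Proof. by move=> H a b c Ha Hb Hc U; have := all3 H Ha Hb Hc; rewrite U. Qed.

Lemma C5E a b c : a < 5 -> b < 5 -> c < 5 -> uniq [:: a; b; c] ->
  hb LC5 a b c = ([set v5 a; v5 b; v5 c] \in C5).
Proof.
move=> Ha Hb Hc U; rewrite /C5 !inE !set3E //; apply/eqP.
move: a b c Ha Hb Hc U; apply: all3_U; by vm_compute.
Qed.

Lemma F32E a b c : a < 5 -> b < 5 -> c < 5 -> uniq [:: a; b; c] ->
  hb LF32 a b c = ([set v5 a; v5 b; v5 c] \in F32).
Proof.
move=> Ha Hb Hc U; rewrite /F32 !inE !set3E //; apply/eqP.
move: a b c Ha Hb Hc U; apply: all3_U; by vm_compute.
Qed.

Lemma v5_neq a b : a < 5 -> b < 5 -> a != b -> v5 a != v5 b.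
Proof. by move=> Ha Hb; rewrite v5E. Qed.

Lemma C5_3 : is_3graph C5.
Proof.
by move=> e; rewrite /C5 !inE => /orP [/orP [/orP [/orP [] |] |] |] /eqP ->;
  rewrite card3 // v5_neq.
Qed.

Lemma F32_3 : is_3graph F32.
Proof.
by move=> e; rewrite /F32 !inE => /orP [/orP [/orP [] |] |] /eqP ->;
  rewrite card3 // v5_neq.
Qed.

Lemma big : all chk (bl 10).
Proof. vm_compute. reflexivity. Qed.

Lemma mem_bl (l : seq bool) : l \in bl (size l).
Proof.
elim: l => [|b l IH] //=.
apply/flattenP; exists [:: false :: l; true :: l]; first exact: map_f.
by case: b; rewrite !inE eqxx ?orbT.
Qed.

Lemma I5thm (G : {set {set 'I_5}}) : is_3graph G -> free_of K43minus G ->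
  shadow_complete G -> isomorphic G C5 \/ isomorphic G F32.
Proof.
move=> G3 Gf Gs.
have : chk (Lg G).
  by have /allP := big; apply; rewrite -[10]/(size (Lg G)); exact: mem_bl.
rewrite /chk k4_G // sh_G // => /orP [] H.
  by left; apply: iso_G H => //; [exact: C5_3 | exact: C5E].
by right; apply: iso_G H => //; [exact: F32_3 | exact: F32E].
Qed.

Lemma iso_transfer (U V : finType) (h : U -> V) (hinv : V -> U) (W : finType)
  (H : {set {set V}}) (C : {set {set W}}) :
  cancel h hinv -> cancel hinv h ->
  isomorphic [set e : {set U} | h @: e \in H] C -> isomorphic H C.
Proof.
move=> hK hinvK [f [fb fe]]; exists (f \o hinv); split.
  by apply: bij_comp => //; exists h.
move=> e; rewrite /edge_img imset_comp.
have := fe (hinv @: e); rewrite /edge_img => ->.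
by rewrite inE -imset_comp (eq_imset _ hinvK) imset_id.
Qed.

Unset Implicit Arguments.
Theorem lemma2p12 (V : finType) (H : {set {set V}}) :
  #|V| = 5 -> is_3graph H -> free_of K43minus H -> shadow_complete H ->
  isomorphic H C5 \/ isomorphic H F32.
Proof.
move=> HV H3 Hf Hs.
pose h := fun i : 'I_5 => enum_val (cast_ord (esym HV) i).
pose hinv := fun v : V => cast_ord HV (enum_rank v).
have hK : cancel h hinv by move=> i; rewrite /h /hinv enum_valK cast_ordKV.
have hinvK : cancel hinv h by move=> v; rewrite /h /hinv cast_ordK enum_rankK.
have hinj : injective h := can_inj hK.
pose G := [set e : {set 'I_5} | h @: e \in H].
have G3 : is_3graph G.
  by move=> e; rewrite inE => /H3; rewrite card_imset.
have Gf : free_of K43minus G.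
  move=> [f [fi fe]]; apply: Hf; exists (h \o f); split; first exact: inj_comp.
  move=> e /fe. rewrite /edge_img inE. move=> X. rewrite (imset_comp h f). exact X.
have Gs : shadow_complete G.
  move=> x y nxy.
  have : h x != h y by rewrite (inj_eq hinj).
  case/Hs => E eH /andP [xe ye].
  exists (h @^-1: E); last by rewrite !inE xe ye.
  rewrite inE; suff -> : h @: (h @^-1: E) = E by [].
  apply/setP => v; apply/imsetP/idP => [[w]|ve]; first by rewrite inE => we ->.
  by exists (hinv v); rewrite ?inE hinvK.
case: (I5thm G3 Gf Gs) => I; [left|right]; exact: iso_transfer hK hinvK I.
Qed.
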